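(* Let $p$ be an odd prime and let $J$ be a finite family of $3p-3$ lattice points in $\mathbb{Z}^2$ (repetitions allowed). Then \[ 1-(p-1,J)-(p,J)+(2p-1,J)+(2p,J)\equiv 0 \pmod p. \]
   Context: For a finite family $X$ of lattice points in $\mathbb{Z}^2$ (points may repeat; subsets are subfamilies, i.e. subsets of the index set) and an integer $n\ge 0$, $(n,X)$ denotes the number of $n$-element subfamilies of $X$ whose coordinatewise sum is congruent to $(0,0)$ modulo $p$. *)

(* Defs.v *)
From mathcomp Require Import all_boot all_order all_algebra.
Set Implicit Arguments. Unset Strict Implicit. Unset Printing Implicit Defensive.
Import GRing.Theory Num.Theory.
Local Open Scope ring_scope.

Definition lattice_family (m : nat) := 'I_m -> int * int.

Definition zero_sum (p : nat) (m : nat) (X : lattice_family m) (S : {set 'I_m}) : bool :=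
  (((\sum_(i in S) (X i).1) %% (p%:Z))%Z == 0%Z)
  && (((\sum_(i in S) (X i).2) %% (p%:Z))%Z == 0%Z).

Definition count_zs (p n m : nat) (X : lattice_family m) : nat :=
  #|[set S : {set 'I_m} | (#|S| == n) && zero_sum p X S]|.

(* Main.v *)
Require Import Defs.
From mathcomp Require Import all_boot all_order all_algebra all_field ring zify.
Set Implicit Arguments. Unset Strict Implicit. Unset Printing Implicit Defensive.
Import GRing.Theory Num.Theory.
Local Open Scope ring_scope.

Lemma toggle (R : pzRingType) (I : finType) (i0 : I) (Q : pred {set I}) :
  (forall S : {set I}, Q (if i0 \in S then S :\ i0 else i0 |: S) = Q S) ->
  \sum_(S : {set I} | Q S) (-1) ^+ #|S| = 0 :> R.
Proof.
move=> hQ.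
pose f := fun S : {set I} => if i0 \in S then S :\ i0 else i0 |: S.
have ff : involutive f.
  move=> S; rewrite /f; case hS: (i0 \in S).
    by rewrite in_setD1 eqxx /= setD1K.
  by rewrite setU11 setU1K // hS.
have sg: forall S, (-1)^+#|f S| = - (-1)^+#|S| :> R.
  move=> S; rewrite /f; case: ifP=> h.
    by rewrite [in RHS](cardsD1 i0 S) h add1n exprS mulN1r opprK.
  by rewrite cardsU1 h add1n exprS mulN1r.
have inf : forall S, (i0 \in f S) = ~~ (i0 \in S).
  by move=> S; rewrite /f; case: ifP => h; rewrite !inE ?eqxx ?h.
rewrite (bigID (fun S : {set I} => i0 \in S)) /=.
rewrite [X in _ + X](reindex_inj (inv_inj ff)) /=.
rewrite [X in _ + X](eq_bigl (fun S => Q S && (i0 \in S))); last first.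
  by move=> S; rewrite inf negbK hQ.
rewrite [X in _ + X](eq_bigr _ (fun S _ => sg S)).
by rewrite sumrN addrN.
Qed.

Lemma alt_prod (R : comRingType) (I : finType) d (a : 'I_d -> I -> R) : (d < #|I|)%N ->
  \sum_(S : {set I}) (-1)^+#|S| * \prod_(k < d) (\sum_(i in S) a k i) = 0.
Proof.
move=> hd.
have E: forall S : {set I}, \prod_(k<d) \sum_(i in S) a k i = \sum_(g : {ffun 'I_d -> I})
     (if [forall k, g k \in S] then \prod_k a k (g k) else 0).
  move=> S. under eq_bigr => k _ do rewrite big_mkcond /=.
  rewrite bigA_distr_bigA /=. apply eq_bigr => g _.
  case: forallP => h.
    by apply eq_bigr => k _; rewrite h.
  case: (pickP (fun k => g k \notin S)) => [k hk | H]; last first.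
    by exfalso; apply h => k; move: (H k) => /negbFE.
  by rewrite (bigD1 k) //= (negbTE hk) mul0r.
under eq_bigr => S _ do rewrite E mulr_sumr.
rewrite exchange_big /=. apply big1 => g _.
have [i0 hi0]: exists i0, i0 \notin codom g.
  case: (pickP (fun i => i \notin codom g)) => [i0 h|H]; first by exists i0.
  exfalso.
  have: (#|I| <= d)%N.
    rewrite -[X in (_ <= X)%N](card_ord d) -(size_codom g).
    apply: leq_trans (card_size _).
    apply: subset_leq_card. apply/subsetP => i _. by move: (H i) => /negbFE.
  by rewrite leqNgt hd.
transitivity (\sum_(S : {set I} | [forall k, g k \in S]) (-1)^+#|S| * \prod_k a k (g k)).
  rewrite [RHS]big_mkcond; apply eq_bigr => S _; case: ifP => _; by rewrite ?mulr0.
rewrite -mulr_suml (@toggle _ _ i0) ?mul0r // => S.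
apply eq_forallb => k.
have ne: g k != i0 by apply: contraNneq hi0 => <-; exact: codom_f.
by case: ifP => _; rewrite !inE (negbTE ne).
Qed.

Lemma alt_pow (R : comRingType) (I : finType) (a b c : I -> R) u v w : (u+v+w < #|I|)%N ->
  \sum_(S : {set I}) (-1)^+#|S| * ((\sum_(i in S) a i)^+u * (\sum_(i in S) b i)^+v
      * (\sum_(i in S) c i)^+w) = 0.
Proof.
move=> h.
rewrite -[RHS](@alt_prod _ _ _ (fun k : 'I_(u+v+w) => if (k < u)%N then a else if (k < u+v)%N then b else c) h).
apply eq_bigr => S _; congr (_ * _).
rewrite -(big_mkord xpredT (fun k : nat => \sum_(i in S) (if (k < u)%N then a else if (k < u + v)%N then b else c) i)).
rewrite (@big_cat_nat _ _ _ (u+v) 0 (u+v+w)) ?leq_addr //.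
rewrite (@big_cat_nat _ _ _ u 0 (u+v)) ?leq_addr //.
set F := (fun k : nat => \sum_(i in S) (if (k < u)%N then a else if (k < u + v)%N then b else c) i).
have h1 : \prod_(0 <= k < u) F k = \prod_(0 <= k < u) \sum_(i in S) a i.
  by apply: eq_big_nat => k /andP[_ hk]; rewrite /F hk.
have h2 : \prod_(u <= k < u + v) F k = \prod_(u <= k < u + v) \sum_(i in S) b i.
  by apply: eq_big_nat => k /andP[hk1 hk]; rewrite /F hk ltnNge hk1.
have h3 : \prod_(u + v <= k < u + v + w) F k = \prod_(u + v <= k < u + v + w) \sum_(i in S) c i.
  apply: eq_big_nat => k /andP[hk1 _]; rewrite /F.
  have -> : (k < u)%N = false by apply/negbTE; rewrite -leqNgt (leq_trans (leq_addr v u) hk1).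
  by rewrite ltnNge hk1.
rewrite h1 h2 h3.
by rewrite !prodr_const_nat subn0 addKn (addnC (u+v) w) addnK.
Qed.

Lemma fermat1 p (pp : prime p) (x : 'F_p) : 1 - x ^+ (p-1) = (x == 0)%:R.
Proof.
have hp : (0 < p - 1)%N by have := prime_gt1 pp; lia.
case: eqP => [->|/eqP hx].
  by rewrite expr0n (_ : (p - 1 == 0)%N = false) ?subr0 //; lia.
have h : x * x ^+ (p - 1) = x * 1.
  rewrite -exprS subn1 prednK ?prime_gt0 // mulr1.
  by have := expf_card x; rewrite card_Fp.
by rewrite (mulfI hx h) subrr.
Qed.

Lemma sum_card_nat (R : pzRingType) (T : finType) (P : pred T) :
  \sum_(x : T) (P x)%:R = #|[set x | P x]|%:R :> R.
Proof.
rewrite -sumr_const [RHS]big_mkcond /=; apply eq_bigr => x _; rewrite inE; by case: (P x).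
Qed.

Lemma expand3 (R : comRingType) (x y z : R) n :
  (1 - x^+n.+1) * (1 - y^+n.+1) * ((z+1)^+n.+1 - z^+n.+1) =
  \sum_(i < n.+1) (x^+0*y^+0*z^+i - x^+(n.+1)*y^+0*z^+i - x^+0*y^+(n.+1)*z^+i
     + x^+(n.+1)*y^+(n.+1)*z^+i) *+ 'C(n.+1, i).
Proof.
rewrite exprD1n big_ord_recr /= binn mulr1n addrK mulr_sumr.
apply eq_bigr => i _; rewrite mulrnAr; congr (_ *+ _).
rewrite !expr0; ring.
Qed.

Lemma dvd3 p k : (0 < p)%N -> (k < 3 * p)%N -> ((p %| k) = [|| k == 0, k == p | k == 2 * p])%N.
Proof.
move=> p0 hk; apply/idP/idP.
  case/dvdnP => q hq; subst k.
  have : (q < 3)%N by rewrite -(ltn_pmul2r p0).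
  by case: q {hk} => [|[|[|q]]] //= _; rewrite ?mul1n ?eqxx ?orbT.
by case/or3P => /eqP ->; rewrite ?dvdn0 ?dvdnn ?dvdn_mull.
Qed.

Ltac decide_eqs := repeat match goal with
 | |- context [(?a == ?b)%N] =>
   let E := fresh "E" in
   first [ have E : (a == b)%N = true by lia
         | have E : (a == b)%N = false by lia ]; rewrite E; clear E
 end.

Lemma key (R : comRingType) p k : prime p -> odd p -> (k <= 3 * p-3)%N ->
 (-1)^+k * ((p %| k)%N%:R - (p %| k.+1)%N%:R) =
   ((k==0)%N%:R - (k==p-1)%N%:R - (k==p)%N%:R + (k==2 * p-1)%N%:R + (k==2 * p)%N%:R : R).
Proof.
move=> pp op hk.
have p3 : (2 < p)%N.
  have := prime_gt1 pp; case: p pp op {hk} => [|[|[|]]] //.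
rewrite !dvd3 //; try lia.
have o1 : odd (p-1) = false by rewrite oddB ?op //; lia.
have o2 : odd (2 * p-1) = true by rewrite oddB ?oddM //; lia.
have o3 : odd (2 * p) = false by rewrite oddM.
have [->|h0] := eqVneq k 0%N.
  by decide_eqs; rewrite /= expr0 !subr0 !addr0 mul1r.
have [->|h1] := eqVneq k (p-1)%N.
  by decide_eqs; rewrite /= -signr_odd o1 expr0 mul1r; ring.
have [->|h2] := eqVneq k p.
  by decide_eqs; rewrite /= -signr_odd op expr1; ring.
have [->|h3] := eqVneq k (2 * p-1)%N.
  by decide_eqs; rewrite /= -signr_odd o2 expr1; ring.
have [->|h4] := eqVneq k (2 * p)%N.
  by decide_eqs; rewrite /= -signr_odd o3 expr0; ring.
by decide_eqs; rewrite /= !subr0 !addr0 mulr0.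
Qed.

Theorem corollary1 (p : nat) (J : lattice_family (3 * p - 3)%N) :
  prime p -> odd p ->
  (1 - (count_zs p (p - 1)%N J)%:Z - (count_zs p p J)%:Z
     + (count_zs p (2 * p - 1)%N J)%:Z + (count_zs p (2 * p)%N J)%:Z
   = 0 %[mod p%:Z])%Z.
Proof.
move=> pp op.
have p3 : (2 < p)%N.
  have := prime_gt1 pp; case: p J pp op => [|[|[|]]] //.
have chp := pchar_Fp pp.
pose a := fun i : 'I_(3 * p - 3) => ((J i).1)%:~R : 'F_p.
pose b := fun i : 'I_(3 * p - 3) => ((J i).2)%:~R : 'F_p.
pose c := fun _ : 'I_(3 * p - 3) => (1 : 'F_p).
have zsE : forall S, zero_sum p J S = (\sum_(i in S) a i == 0) && (\sum_(i in S) b i == 0).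
  move=> S; rewrite /zero_sum /a /b -!rmorph_sum -!(dvdz_pcharf chp).
  by rewrite !(sameP eqP dvdz_mod0P).
have main : \sum_(S : {set 'I_(3 * p - 3)}) (-1)^+#|S| *
    ((1 - (\sum_(i in S) a i)^+(p-1)) * (1 - (\sum_(i in S) b i)^+(p-1)) *
     ((\sum_(i in S) c i + 1)^+(p-1) - (\sum_(i in S) c i)^+(p-1))) = 0.
  have [n hn] : exists n, p = n.+2 by exists (p-2)%N; lia.
  have e1 : (p - 1 = n.+1)%N by lia.
  rewrite e1.
  under eq_bigr => S _ do rewrite expand3 mulr_sumr.
  rewrite exchange_big /=; apply big1 => i _.
  under eq_bigr => S _ do rewrite mulrnAr.
  rewrite sumrMnl.
  under eq_bigr => S _ do rewrite !mulrDr !mulrN.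
  rewrite !big_split /= !sumrN !alt_pow ?card_ord ?addr0 ?mul0rn //.
  by rewrite !subr0 mul0rn.
  1-4: by have := ltn_ord i; lia.
have pt : forall S : {set 'I_(3 * p - 3)}, (-1)^+#|S| *
    ((1 - (\sum_(i in S) a i)^+(p-1)) * (1 - (\sum_(i in S) b i)^+(p-1)) *
     ((\sum_(i in S) c i + 1)^+(p-1) - (\sum_(i in S) c i)^+(p-1))) =
    ((#|S| == 0)%N && zero_sum p J S)%:R - ((#|S| == p - 1)%N && zero_sum p J S)%:R
    - ((#|S| == p)%N && zero_sum p J S)%:R + ((#|S| == 2 * p - 1)%N && zero_sum p J S)%:R
    + ((#|S| == 2 * p)%N && zero_sum p J S)%:R.
  move=> S.
  have e3 : forall x y : 'F_p, x - y = (1 - y) - (1 - x) by move=> x y; ring.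
  rewrite [X in _ * (_ * X)]e3 !fermat1 //.
  rewrite /c sumr_const -mulrSr -!(dvdn_pcharf chp).
  have hk : (#|S| <= 3 * p - 3)%N.
    by rewrite -[X in (_ <= X)%N](card_ord (3 * p - 3)); apply: max_card.
  rewrite mulrCA (key _ pp op hk) zsE.
  set za := (\sum_(i in S) a i == 0); set zb := (\sum_(i in S) b i == 0).
  by case: za; case: zb; rewrite ?andbT ?andbF /= ?mul1r ?mul0r ?subr0 ?addr0.
have tot : (0 : 'F_p) = (count_zs p 0 J)%:R - (count_zs p (p-1) J)%:R
    - (count_zs p p J)%:R + (count_zs p (2 * p - 1) J)%:R + (count_zs p (2 * p) J)%:R.
  rewrite -main; under eq_bigr => S _ do rewrite pt.
  by rewrite !big_split /= !sumrN !sum_card_nat.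
have c0 : count_zs p 0 J = 1%N.
  rewrite /count_zs (_ : [set S | _] = [set set0]) ?cards1 //.
  apply/setP => S; rewrite !inE cards_eq0.
  case: eqP => [->|] //=.
  by rewrite /zero_sum !big_set0 mod0z eqxx.
rewrite mod0z; apply/dvdz_mod0P; rewrite (dvdz_pcharf chp).
rewrite !rmorphD !rmorphN rmorph1 /= -!pmulrn.
by rewrite tot c0.
Qed.
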